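(* For each $k\in\mathbb{N}$ let $a_k,b_k,c_k\in\mathbb{R}$ with $a_k\ge0$, and $f_k(x)=a_kx^2+b_kx+c_k$ on $\mathbb{R}$ (so $f_k\in\Gamma_0(\mathbb{R})$). Then for $r>0$, $$e_rf_k(x)=\frac{a_kr}{2a_k+r}x^2+\frac{b_kr}{2a_k+r}x+c_k-\frac{b_k^2}{2(2a_k+r)}.$$ Moreover, suppose $f_k$ epiconverges to $f$ as $k\to\infty$. Then: (i) if $f\equiv\infty$, then $e_rf\equiv\infty$; (ii) if $f(x)=-\infty$ for some $x$, then $e_rf\equiv-\infty$; (iii) if $f$ is proper, then $e_rf(x)=arx^2+bx+c$ for some $a\ge0$ and $b,c\in\mathbb{R}$; this holds even in the case where $a_k\to\infty$ and $f$ is of the form $\iota_{\{\beta\}}+\gamma$ for constants $\beta,\gamma$.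
   Context: $\Gamma_0(\mathbb{R})$ is the set of proper convex lsc functions $\mathbb{R}\to\mathbb{R}\cup\{\infty\}$. The Moreau envelope is $e_rf(x)=\inf_{y}\{f(y)+\frac r2(y-x)^2\}$; for improper $f$ in (i),(ii) it is understood via the same formula. Epiconvergence $f_k\to f$ means the epigraphs of $f_k$ converge to the epigraph of $f$ in the Painlevé–Kuratowski sense. $\iota_{\{\beta\}}$ is the indicator function of $\{\beta\}$. *)

(* Defs.v *)
From HB Require Import structures.
From mathcomp Require Import all_boot all_order all_algebra.
From mathcomp Require Import all_classical all_reals all_analysis.
Set Implicit Arguments. Unset Strict Implicit. Unset Printing Implicit Defensive.
Import Order.TTheory GRing.Theory Num.Theory.
Import numFieldNormedType.Exports.
Local Open Scope classical_set_scope.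
Local Open Scope ring_scope.

Definition moreau_env (R : realType) (r : R) (f : R -> \bar R) (x : R) : \bar R :=
  ereal_inf [set (f y + ((r / 2) * (y - x) ^+ 2)%:E)%E | y in setT].

Definition epi (R : realType) (f : R -> \bar R) : set (R * R) :=
  [set p | (f p.1 <= p.2%:E)%E].

(* Painleve-Kuratowski inner and outer limits of a sequence of sets
   (Rockafellar-Wets, Def. 4.1), in the topological space T. *)
Definition pk_inner (T : topologicalType) (C : nat -> set T) : set T :=
  [set x | exists (N : nat) (p : nat -> T),
     (forall k, (N <= k)%N -> C k (p k)) /\ p @ \oo --> x].

Definition pk_outer (T : topologicalType) (C : nat -> set T) : set T :=
  [set x | exists (phi : nat -> nat) (p : nat -> T),
     (forall j, (phi j < phi j.+1)%N) /\ (forall j, C (phi j) (p j)) /\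
     p @ \oo --> x].

Definition pk_converges (T : topologicalType) (C : nat -> set T) (L : set T) :=
  pk_inner C = L /\ pk_outer C = L.

Definition epiconverges (R : realType) (fk : nat -> R -> \bar R) (f : R -> \bar R) :=
  @pk_converges (R * R)%type (fun k => epi (fk k)) (epi f).

Definition proper_fun (R : realType) (f : R -> \bar R) :=
  (forall x, f x != -oo)%E /\ (exists x, f x != +oo)%E.

Definition indic_single (R : realType) (beta : R) (x : R) : \bar R :=
  if x == beta then 0%E else +oo%E.

(* Main.v *)
Require Import Defs.
From HB Require Import structures.
From mathcomp Require Import all_boot all_order all_algebra.
From mathcomp Require Import all_classical all_reals all_analysis.
From mathcomp Require Import ring lra.
Import Order.TTheory GRing.Theory Num.Theory.
Import numFieldNormedType.Exports.
Local Open Scope classical_set_scope.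
Local Open Scope ring_scope.

Section Q.
Variable R : realType.
Definition Gq (a b c r x : R) := (a * r) / (2 * a + r) * x ^+ 2 + (b * r) / (2 * a + r) * x
        + c - b ^+ 2 / (2 * (2 * a + r)).
Definition ysq (a b r x : R) := (r * x - b) / (2 * a + r).

Lemma quad_id (a b c r x y : R) : 0 <= a -> 0 < r ->
  a * y ^+ 2 + b * y + c + r / 2 * (y - x) ^+ 2 =
  Gq a b c r x + (a + r / 2) * (y - ysq a b r x) ^+ 2.
Proof.
move=> ha hr; have hd : 2 * a + r != 0 by apply/lt0r_neq0; lra.
rewrite /Gq /ysq; field; rewrite hd /=; lra.
Qed.

Lemma quad_le (a b c r x y : R) : 0 <= a -> 0 < r ->
  Gq a b c r x <= a * y ^+ 2 + b * y + c + r / 2 * (y - x) ^+ 2.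
Proof.
move=> ha hr; rewrite quad_id // lerDl; apply: mulr_ge0; last exact: sqr_ge0.
lra.
Qed.


Lemma quad_at (a b c r x : R) : 0 <= a -> 0 < r ->
  a * (ysq a b r x) ^+ 2 + b * (ysq a b r x) + c =
  Gq a b c r x - r / 2 * (ysq a b r x - x) ^+ 2.
Proof.
move=> ha hr; have := quad_id a b c r x (ysq a b r x) ha hr.
rewrite subrr expr0n /= mulr0 addr0 => <-; ring.
Qed.

Lemma ys_alt (a b r x : R) : 0 <= a -> 0 < r ->
  ysq a b r x = x * (1 - 2 * ((a * r) / (2 * a + r)) / r) - (b * r) / (2 * a + r) / r.
Proof.
move=> ha hr; have hd : 2 * a + r != 0 by apply/lt0r_neq0; lra.
rewrite /ysq; field; rewrite hd /=; lra.
Qed.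

Lemma G_interp (a b c r x : R) : 0 <= a -> 0 < r ->
  Gq a b c r x = Gq a b c r 0 + x * ((Gq a b c r 1 - Gq a b c r (-1)) / 2)
     + x ^+ 2 * ((Gq a b c r 1 + Gq a b c r (-1)) / 2 - Gq a b c r 0).
Proof.
move=> ha hr; have hd : 2 * a + r != 0 by apply/lt0r_neq0; lra.
rewrite /Gq; field; rewrite hd /=; lra.
Qed.

Lemma env_quad (a b c r x : R) : 0 <= a -> 0 < r ->
  ereal_inf [set ((a * y ^+ 2 + b * y + c)%:E + ((r / 2) * (y - x) ^+ 2)%:E)%E | y in setT]
  = (Gq a b c r x)%:E.
Proof.
move=> ha hr; apply/eqP; rewrite eq_le; apply/andP; split.
- apply: ereal_inf_lbound; exists (ysq a b r x) => //.
  by rewrite -EFinD quad_id // subrr expr0n /= mulr0 addr0.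
- apply: le_ereal_inf_tmp => z [y _ <-]; rewrite -EFinD lee_fin.
  exact: quad_le.
Qed.
End Q.
Arguments Gq {R}. Arguments ysq {R}. Arguments quad_id {R}. Arguments quad_le {R}. Arguments quad_at {R}. Arguments ys_alt {R}. Arguments G_interp {R}. Arguments env_quad {R}.

Lemma incr_ge (phi : nat -> nat) : (forall j, (phi j < phi j.+1)%N) -> forall j, (j <= phi j)%N.
Proof. move=> h; elim=> [|j ih] //; exact: leq_ltn_trans ih (h j). Qed.

Lemma subseq_cvg (T : topologicalType) (u : nat -> T) (l : T) (phi : nat -> nat) :
  (forall j, (phi j < phi j.+1)%N) -> u @ \oo --> l -> (u \o phi) @ \oo --> l.
Proof.
move=> h ul; apply: cvg_comp ul.
move=> A [N _ HN]; exists N => // j /= Nj; apply: HN => /=.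
by rewrite (leq_trans Nj) // incr_ge.
Qed.

Lemma bw (R : realType) (u : nat -> R) (M : R) : (forall n, `|u n| <= M) ->
  exists phi : nat -> nat, (forall j, (phi j < phi j.+1)%N) /\ exists l : R, (u \o phi) @ \oo --> l.
Proof.
move=> hM.
have : bounded_fun u.
  rewrite /bounded_near; near=> K => n _ /=; apply: le_trans (hM n) _.
  by near: K; apply: nbhs_pinfty_ge; rewrite num_real.
move=> /bolzano_weierstrass [phi phiinc phicvg].
exists phi; split; first by move/increasing_seqP: phiinc.
by exists (lim ((u \o phi) @ \oo)).
Unshelve. all: end_near. Qed.

Fixpoint ext (h : nat -> nat -> nat) (j : nat) : nat :=
  if j is j'.+1 then h j (ext h j').+1 else h 0%N 0%N.

Lemma extract (P : nat -> nat -> Prop) :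
  (forall j N, exists k, (N <= k)%N /\ P j k) ->
  exists phi : nat -> nat, (forall j, (phi j < phi j.+1)%N) /\ forall j, P j (phi j).
Proof.
move=> H.
have [h hh] : exists h : nat -> nat -> nat, forall j N, (N <= h j N)%N /\ P j (h j N).
  have /choice [h0 hh0] : forall jN : nat * nat, exists k, (jN.2 <= k)%N /\ P jN.1 k.
    by move=> [j N]; exact: H.
  by exists (fun j N => h0 (j, N)) => j N; exact: (hh0 (j, N)).
exists (ext h); split.
- by move=> j /=; have [+ _] := hh j.+1 (ext h j).+1.
- by case=> [|j] /=; [exact: (hh 0%N 0%N).2 | exact: (hh j.+1 _).2].
Qed.

Lemma incr_lt (phi : nat -> nat) : (forall j, (phi j < phi j.+1)%N) ->
  forall m n, (m < n)%N -> (phi m < phi n)%N.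
Proof.
move=> h m; elim=> [|n ih] //; rewrite ltnS leq_eqVlt => /orP[/eqP -> //|/ih].
by move=> hm; exact: ltn_trans hm (h n).
Qed.

Lemma sq_le (R : realType) (u w : R) : `|u| <= w -> u ^+ 2 <= w ^+ 2.
Proof.
move=> h; rewrite -(real_normK (num_real u)); have h0 := normr_ge0 u; nra.
Qed.

Lemma conv_quad (R : realType) (a b c p y l : R) : 0 <= a -> 0 <= l -> l <= 1 ->
  a * (p + l * (y - p)) ^+ 2 + b * (p + l * (y - p)) + c <=
  (1 - l) * (a * p ^+ 2 + b * p + c) + l * (a * y ^+ 2 + b * y + c).
Proof.
move=> ha hl0 hl1; rewrite -subr_ge0.
have -> : (1 - l) * (a * p ^+ 2 + b * p + c) + l * (a * y ^+ 2 + b * y + c) -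
  (a * (p + l * (y - p)) ^+ 2 + b * (p + l * (y - p)) + c) = a * (l * (1 - l)) * (y - p) ^+ 2
  by ring.
apply: mulr_ge0; last exact: sqr_ge0.
apply: mulr_ge0 => //; apply: mulr_ge0 => //; lra.
Qed.

Lemma cvg_fst' (R : realType) (p : nat -> R * R) (y t : R) :
  p @ \oo --> (y, t) -> (fun k => (p k).1) @ \oo --> y.
Proof. by move=> h; apply: cvg_comp h _; exact: cvg_fst. Qed.

Lemma cvg_snd' (R : realType) (p : nat -> R * R) (y t : R) :
  p @ \oo --> (y, t) -> (fun k => (p k).2) @ \oo --> t.
Proof. by move=> h; apply: cvg_comp h _; exact: cvg_snd. Qed.

Lemma cvg_pair' (R : realType) (u v : nat -> R) (y t : R) :
  u @ \oo --> y -> v @ \oo --> t -> (fun k => (u k, v k)) @ \oo --> (y, t).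
Proof. by move=> hu hv; exact: (cvg_pair hu hv). Qed.

Lemma ev_nat (P : nat -> Prop) : (\forall k \near \oo, P k) -> exists N, forall k, (N <= k)%N -> P k.
Proof. by case=> N _ HN; exists N => k hk; apply: HN. Qed.
Arguments sq_le {R}. Arguments conv_quad {R}.
Arguments cvg_fst' {R p y t}. Arguments cvg_snd' {R p y t}.
Arguments cvg_pair' {R u v y t}. Arguments subseq_cvg {T u l phi}. Arguments bw {R}.
Arguments incr_ge {phi}. Arguments incr_lt {phi}.

Lemma cvg_sqB (R : realType) (u : nat -> R) (l x : R) :
  u @ \oo --> l -> (fun j => (u j - x) ^+ 2) @ \oo --> (l - x) ^+ 2.
Proof.
move=> hu; have h : (fun j => u j - x) @ \oo --> l - x by apply: cvgB => //; exact: cvg_cst.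
have -> : (fun j => (u j - x) ^+ 2) = (fun j => u j - x) \* (fun j => u j - x).
  by apply/funext => j; rewrite /= expr2.
by rewrite expr2; exact: (cvgM h h).
Qed.
Arguments cvg_sqB {R u l}.

Theorem theorem3p1 (R : realType) (a b c : nat -> R)
  (ha : forall k, 0 <= a k) (f : R -> \bar R) (r : R) (hr : 0 < r) :
  let fk := fun (k : nat) (x : R) => (a k * x ^+ 2 + b k * x + c k)%:E in
  (forall k x,
     moreau_env r (fk k) x =
       ((a k * r) / (2 * a k + r) * x ^+ 2 + (b k * r) / (2 * a k + r) * x
        + c k - (b k) ^+ 2 / (2 * (2 * a k + r)))%:E)
  /\
  (epiconverges fk f ->
     ((forall x, f x = +oo%E) -> forall x, moreau_env r f x = +oo%E)
     /\ ((exists x, f x = -oo%E) -> forall x, moreau_env r f x = -oo%E)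
     /\ (proper_fun f ->
           exists a0 b0 c0 : R, 0 <= a0 /\
             forall x, moreau_env r f x = (a0 * r * x ^+ 2 + b0 * x + c0)%:E)
     /\ ((a @ \oo --> +oo) ->
         (exists beta gamma : R, f = (fun x => indic_single beta x + gamma%:E)%E) ->
           exists a0 b0 c0 : R, 0 <= a0 /\
             forall x, moreau_env r f x = (a0 * r * x ^+ 2 + b0 * x + c0)%:E)).
Proof.
move=> fk.
have Henv : forall k x, moreau_env r (fk k) x = (Gq (a k) (b k) (c k) r x)%:E.
  by move=> k x; rewrite /moreau_env env_quad.
split; first exact: Henv.
move=> [Hin Hout].
have In : forall y t, (f y <= t%:E)%E -> pk_inner (fun k => epi (fk k)) (y, t).
  by move=> y t h; rewrite Hin.
have Out : forall y t, pk_outer (fun k => epi (fk k)) (y, t) -> (f y <= t%:E)%E.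
  by move=> y t; rewrite Hout.
split.
  move=> hf x; rewrite /moreau_env; apply/ereal_inf_pinfty => z [y _ <-] /=.
  by rewrite hf.
split.
  move=> [x0 hx0] x; apply/eqP; rewrite eq_le leNye andbT.
  by apply: ereal_inf_lbound; exists x0 => //; rewrite hx0.
split; last first.
  move=> _ [beta [gamma ->]].
  exists (1/2), (-(r * beta)), (r * beta ^+ 2 / 2 + gamma); split; first lra.
  move=> x; rewrite /moreau_env; apply/eqP; rewrite eq_le; apply/andP; split.
  - apply: ereal_inf_lbound; exists beta => //.
    rewrite /indic_single eqxx add0e -EFinD; congr (_%:E); by field.
  - apply: le_ereal_inf_tmp => z [y _ <-]; rewrite /indic_single.
    case: eqP => [->|_].
      rewrite add0e -EFinD lee_fin le_eqVlt; apply/orP; left; apply/eqP; by field.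
    by rewrite leey.
move=> [fnoinf [x0 hx0]].
have [v0 hv0] : exists v0, f x0 = v0%:E.
  by move: (fnoinf x0) hx0; case: (f x0) => [v| |] //; exists v.
pose fv k y := a k * y ^+ 2 + b k * y + c k.
pose g k x := Gq (a k) (b k) (c k) r x.
have epiE : forall k (p : R * R), epi (fk k) p <-> fv k p.1 <= p.2.
  by move=> k p; rewrite /epi /= lee_fin.
have [N0 [p0 [hp0 cp0]]] : pk_inner (fun k => epi (fk k)) (x0, v0) by apply: In; rewrite hv0.
have c1 := cvg_fst' cp0.
have c2 := cvg_snd' cp0.
have [N1 hN1] : exists N1, forall k, (N1 <= k)%N ->
   `|(p0 k).1 - x0| <= 1 /\ (p0 k).2 <= v0 + 1 /\ fv k (p0 k).1 <= (p0 k).2.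
  apply: ev_nat.
  have e1 : \forall k \near \oo, `|x0 - (p0 k).1| <= 1 by move: c1 => /cvgr_dist_le /(_ 1 ltr01).
  have e2 : \forall k \near \oo, `|v0 - (p0 k).2| <= 1 by move: c2 => /cvgr_dist_le /(_ 1 ltr01).
  near=> k; split; [|split].
  - rewrite distrC; near: k; exact: e1.
  - have : `|v0 - (p0 k).2| <= 1 by near: k; exact: e2.
    rewrite ler_norml => /andP[h1 h2]; lra.
  - apply/epiE; near: k; exists N0 => // k hk; exact: hp0.
have UB : forall x k, (N1 <= k)%N -> g k x <= v0 + 1 + r / 2 * (`|x0 - x| + 1) ^+ 2.
  move=> x k hk; have [h1 [h2 h3]] := hN1 k hk.
  apply: le_trans (quad_le (a k) (b k) (c k) r x (p0 k).1 (ha k) hr) _.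
  apply: lerD; first by rewrite /fv in h3; lra.
  apply: ler_wpM2l; first lra.
  apply: sq_le.
  have -> : (p0 k).1 - x = ((p0 k).1 - x0) + (x0 - x) by ring.
  have := ler_normD ((p0 k).1 - x0) (x0 - x); lra.
have Key : forall x (phi : nat -> nat), (forall j, (phi j < phi j.+1)%N) ->
    (forall j, g (phi j) x <= - (j%:R)) -> False.
  move=> x phi phiinc hphi.
  pose K := 2 + `|x - x0|.
  pose V := v0 + 1.
  pose k_ j := phi (j + N1)%N.
  have kN : forall j, (N1 <= k_ j)%N.
    by move=> j; rewrite /k_ (leq_trans _ (incr_ge phiinc _)) // leq_addl.
  pose p_ j := (p0 (k_ j)).1.
  pose y_ j := ysq (a (k_ j)) (b (k_ j)) r x.
  pose D j := y_ j - p_ j.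
  pose lam j := (1 + `|D j|)^-1.
  pose w j := p_ j + lam j * D j.
  have lam0 : forall j, 0 < lam j.
    by move=> j; rewrite invr_gt0; have := normr_ge0 (D j); lra.
  have lam1 : forall j, lam j <= 1.
    move=> j; rewrite /lam invf_le1; have := normr_ge0 (D j); lra.
  have lamD : forall j, lam j * `|D j| <= 1.
    move=> j; rewrite /lam mulrC ler_pdivrMr; have := normr_ge0 (D j); lra.
  have wb : forall j, `|w j| <= `|x0| + 2.
    move=> j; have [h1 _] : `|p_ j - x0| <= 1 /\ True.
      by split => //; have [] := hN1 _ (kN j).
    have hp : `|p_ j| <= `|x0| + 1.
      have := ler_normD x0 (p_ j - x0).
      have -> : x0 + (p_ j - x0) = p_ j by ring.
      lra.
    have : `|lam j * D j| <= 1 by rewrite normrM gtr0_norm //; exact: lamD.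
    have := ler_normD (p_ j) (lam j * D j).
    rewrite /w; lra.
  have wf : forall j (T : R), 0 <= T -> T * K + T ^+ 2 / (2 * r) <= (j + N1)%:R ->
      fv (k_ j) (w j) <= `|V| - T.
    move=> j T T0 hT.
    have [h1 [h2 h3]] : `|p_ j - x0| <= 1 /\ (p0 (k_ j)).2 <= v0 + 1 /\
       fv (k_ j) (p_ j) <= (p0 (k_ j)).2 := hN1 _ (kN j).
    have hg : g (k_ j) x <= - ((j + N1)%:R) := hphi (j + N1)%N.
    have hy : fv (k_ j) (y_ j) = g (k_ j) x - r / 2 * (y_ j - x) ^+ 2.
      exact: quad_at (ha _) hr.
    have hc : fv (k_ j) (w j) <= (1 - lam j) * fv (k_ j) (p_ j) + lam j * fv (k_ j) (y_ j).
      exact: conv_quad (ha _) (ltW (lam0 j)) (lam1 j).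
    pose s := `|y_ j - x|.
    have hD : `|D j| <= s + K - 1.
      have e : D j = (y_ j - x) + (x - x0) + (x0 - p_ j) by rewrite /D; ring.
      rewrite e; have := ler_normD (y_ j - x + (x - x0)) (x0 - p_ j).
      have := ler_normD (y_ j - x) (x - x0).
      rewrite (distrC x0 (p_ j)) /K /s; lra.
    have hs2 : (y_ j - x) ^+ 2 = s ^+ 2 by rewrite /s real_normK // num_real.
    have key : T <= lam j * ((j + N1)%:R + r / 2 * s ^+ 2).
      rewrite /lam mulrC ler_pdivlMr; last by have := normr_ge0 (D j); lra.
      have amgm : T * s <= T ^+ 2 / (2 * r) + r / 2 * s ^+ 2.
        rewrite -subr_ge0.
        have -> : T ^+ 2 / (2 * r) + r / 2 * s ^+ 2 - T * s = (T - r * s) ^+ 2 / (2 * r).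
          by field; lra.
        apply: divr_ge0; [exact: sqr_ge0 | lra].
      have : T * (1 + `|D j|) <= T * s + T * K.
        by rewrite -mulrDr; apply: ler_wpM2l => //; lra.
      lra.
    have t1 : lam j * fv (k_ j) (y_ j) <= - (lam j * ((j + N1)%:R + r / 2 * s ^+ 2)).
      rewrite -mulrN; apply: ler_wpM2l; first exact: ltW.
      rewrite hy -hs2; lra.
    have t2 : (1 - lam j) * fv (k_ j) (p_ j) <= `|V|.
      have hV : fv (k_ j) (p_ j) <= `|V| by have := ler_norm V; rewrite /V in h2 *; lra.
      have := lam0 j; have := lam1 j; have := normr_ge0 V; nra.
    lra.
  have [psi [psiinc [z cz]]] := bw w _ wb.
  have [t ht] : exists t, ~ (f z <= t%:E)%E.
    case E: (f z) => [v| |].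
    - by exists (v - 1); rewrite lee_fin; lra.
    - by exists 0.
    - by have := fnoinf z; rewrite E.
  apply: ht; apply: Out.
  pose T := Num.max 0 (`|V| - t).
  have T0 : 0 <= T by rewrite /T le_max lexx.
  have Tt : `|V| - T <= t.
    have : `|V| - t <= T by rewrite /T le_max lexx orbT.
    lra.
  pose J := (Num.truncn (T * K + T ^+ 2 / (2 * r))).+1.
  have hJ : T * K + T ^+ 2 / (2 * r) <= J%:R by apply/ltW/truncnS_gt.
  exists (fun i => k_ (psi (i + J)%N)), (fun i => (w (psi (i + J)%N), t)).
  split; [|split].
  - move=> i; rewrite /k_; apply: incr_lt phiinc _ _ _; rewrite ltn_add2r.
    by apply: incr_lt psiinc _ _ _; rewrite addSn ltnSn.
  - move=> i; apply/epiE => /=; apply: le_trans (wf _ T T0 _) Tt.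
    apply: le_trans hJ _; rewrite ler_nat.
    apply: leq_trans (leq_addr N1 _).
    exact: leq_trans (leq_addl i J) (incr_ge psiinc _).
  - apply: cvg_pair'; last exact: cvg_cst.
    have := subseq_cvg (phi := fun i => (i + J)%N) _ cz; apply.
    by move=> i; rewrite addSn ltnSn.
have LB : forall x, exists m N, forall k, (N <= k)%N -> m <= g k x.
  move=> x; apply: contrapT => hneg.
  have H : forall j N, exists k, (N <= k)%N /\ g k x <= - (j%:R).
    move=> j N; apply: contrapT => hk; apply: hneg; exists (- (j%:R)), N => k hNk.
    case: (lerP (- (j%:R)) (g k x)) => // h; exfalso; apply: hk; exists k; split => //.
    exact: ltW.
  have [phi [phiinc hphi]] := extract (fun j k => g k x <= - (j%:R)) H.
  exact: Key x phi phiinc hphi.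
have bnd : forall x, exists M N, forall k, (N <= k)%N -> `|g k x| <= M.
  move=> x; have [m [N hm]] := LB x.
  pose U := v0 + 1 + r / 2 * (`|x0 - x| + 1) ^+ 2.
  exists (`|m| + `|U|), (maxn N N1) => k hk.
  have h1 := hm k (leq_trans (leq_maxl _ _) hk).
  have h2 : g k x <= U := UB x k (leq_trans (leq_maxr _ _) hk).
  have h3 := ler_norm (- m); rewrite normrN in h3.
  have h4 := ler_norm U.
  have h5 := normr_ge0 m.
  have h6 := normr_ge0 U.
  rewrite ler_norml; apply/andP; split; lra.
have [Mm [Nm hMm]] := bnd (-1).
have [Mz [Nz hMz]] := bnd 0.
have [Mp [Np hMp]] := bnd 1.
pose N2 := maxn Nm (maxn Nz Np).
have hN2m : forall k, (N2 <= k)%N -> `|g k (-1)| <= Mm.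
  by move=> k hk; apply: hMm; apply: leq_trans hk; rewrite /N2 leq_max leqnn.
have hN2z : forall k, (N2 <= k)%N -> `|g k 0| <= Mz.
  by move=> k hk; apply: hMz; apply: leq_trans hk; rewrite /N2 !leq_max leqnn orbT.
have hN2p : forall k, (N2 <= k)%N -> `|g k 1| <= Mp.
  by move=> k hk; apply: hMp; apply: leq_trans hk; rewrite /N2 !leq_max leqnn !orbT.
have [phi1 [inc1 [lm cm]]] :=
  bw (fun j => g (j + N2)%N (-1)) Mm (fun j => hN2m _ (leq_addl _ _)).
have [phi2 [inc2 [lz cz]]] :=
  bw (fun j => g (phi1 j + N2)%N 0) Mz (fun j => hN2z _ (leq_addl _ _)).
have [phi3 [inc3 [lp cp]]] :=
  bw (fun j => g (phi1 (phi2 j) + N2)%N 1) Mp (fun j => hN2p _ (leq_addl _ _)).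
pose psi j := (phi1 (phi2 (phi3 j)) + N2)%N.
have psiinc : forall j, (psi j < psi j.+1)%N.
  move=> j; rewrite /psi ltn_add2r; apply: incr_lt inc1 _ _ _.
  by apply: incr_lt inc2 _ _ _; exact: inc3.
have gm : (fun j => g (psi j) (-1)) @ \oo --> lm.
  exact: (subseq_cvg inc3 (subseq_cvg inc2 cm)).
have gz : (fun j => g (psi j) 0) @ \oo --> lz.
  exact: (subseq_cvg inc3 cz).
have gp : (fun j => g (psi j) 1) @ \oo --> lp by exact: cp.
pose lA := (lp + lm) / 2 - lz.
pose lB := (lp - lm) / 2.
pose lC := lz.
have hdk : forall k, 2 * a k + r != 0 by move=> k; apply/lt0r_neq0; have := ha k; lra.
have eA : forall k, a k * r / (2 * a k + r) = (g k 1 + g k (-1)) / 2 - g k 0.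
  by move=> k; rewrite /g /Gq; field; rewrite hdk.
have eB : forall k, b k * r / (2 * a k + r) = (g k 1 - g k (-1)) / 2.
  by move=> k; rewrite /g /Gq; field; rewrite hdk.
have cA : (fun j => a (psi j) * r / (2 * a (psi j) + r)) @ \oo --> lA.
  have -> : (fun j => a (psi j) * r / (2 * a (psi j) + r)) =
      (fun j => (g (psi j) 1 + g (psi j) (-1)) / 2 - g (psi j) 0).
    by apply/funext => j; rewrite eA.
  apply: cvgB => //; apply: cvgMr_tmp; exact: cvgD.
have cB : (fun j => b (psi j) * r / (2 * a (psi j) + r)) @ \oo --> lB.
  have -> : (fun j => b (psi j) * r / (2 * a (psi j) + r)) =
      (fun j => (g (psi j) 1 - g (psi j) (-1)) / 2).
    by apply/funext => j; rewrite eB.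
  apply: cvgMr_tmp; exact: cvgB.
pose Gl x := lC + x * lB + x ^+ 2 * lA.
have cG : forall x, (fun j => g (psi j) x) @ \oo --> Gl x.
  move=> x.
  have -> : (fun j => g (psi j) x) = (fun j => g (psi j) 0 +
      x * ((g (psi j) 1 - g (psi j) (-1)) / 2) +
      x ^+ 2 * ((g (psi j) 1 + g (psi j) (-1)) / 2 - g (psi j) 0)).
    by apply/funext => j; rewrite /g G_interp.
  apply: cvgD; first apply: cvgD => //.
  - apply: cvgMl_tmp; apply: cvgMr_tmp; exact: cvgB.
  - apply: cvgMl_tmp; apply: cvgB => //; apply: cvgMr_tmp; exact: cvgD.
have lA0 : 0 <= lA.
  apply: (ler_cvg_to (cvg_cst 0) cA); near=> j.
  apply: divr_ge0; first exact: mulr_ge0 (ha _) (ltW hr).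
  by have := ha (psi j); lra.
have Efin : forall x, moreau_env r f x = (Gl x)%:E.
  move=> x; apply/eqP; rewrite eq_le; apply/andP; split.
  - pose ys := x * (1 - 2 * lA / r) - lB / r.
    pose ts := Gl x - r / 2 * (ys - x) ^+ 2.
    have cys : (fun j => ysq (a (psi j)) (b (psi j)) r x) @ \oo --> ys.
      have -> : (fun j => ysq (a (psi j)) (b (psi j)) r x) = (fun j =>
          x * (1 - 2 * (a (psi j) * r / (2 * a (psi j) + r)) / r)
          - b (psi j) * r / (2 * a (psi j) + r) / r).
        by apply/funext => j; rewrite ys_alt.
      apply: cvgB; last exact: cvgMr_tmp.
      apply: cvgMl_tmp; apply: cvgB; first exact: cvg_cst.
      apply: cvgMr_tmp; exact: cvgMl_tmp.
    have hout : pk_outer (fun k => epi (fk k)) (ys, ts).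
      exists psi, (fun j => (ysq (a (psi j)) (b (psi j)) r x,
        g (psi j) x - r / 2 * (ysq (a (psi j)) (b (psi j)) r x - x) ^+ 2)).
      split => //; split.
      + move=> j; apply/epiE => /=; rewrite le_eqVlt; apply/orP; left; apply/eqP.
        exact: quad_at (ha _) hr.
      + apply: cvg_pair'; first exact: cys.
        apply: cvgB; first exact: cG.
        apply: cvgMl_tmp; exact: cvg_sqB.
    have hf := Out _ _ hout.
    apply: ge_ereal_inf; exists (f ys + (r / 2 * (ys - x) ^+ 2)%:E)%E; first by exists ys.
    move: hf; case E: (f ys) => [v| |] //.
    + rewrite lee_fin -EFinD lee_fin => hv; rewrite /ts in hv; lra.
    + by have := fnoinf ys; rewrite E.
  - apply: le_ereal_inf_tmp => _ [y _ <-].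
    case E: (f y) => [v| |].
    + have [N [p [hp cpp]]] : pk_inner (fun k => epi (fk k)) (y, v) by apply: In; rewrite E.
      rewrite -EFinD lee_fin.
      have cR : (fun j => (p (psi j)).2 + r / 2 * ((p (psi j)).1 - x) ^+ 2) @ \oo
          --> v + r / 2 * (y - x) ^+ 2.
        apply: cvgD; first exact: (subseq_cvg psiinc (cvg_snd' cpp)).
        apply: cvgMl_tmp; apply: cvg_sqB; exact: (subseq_cvg psiinc (cvg_fst' cpp)).
      apply: (ler_cvg_to (cG x) cR); near=> j.
      have hk : (N <= psi j)%N.
        apply: leq_trans (incr_ge psiinc j); near: j; exists N => //.
      have := (epiE _ _).1 (hp _ hk).
      have := quad_le (a (psi j)) (b (psi j)) (c (psi j)) r x (p (psi j)).1 (ha _) hr.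
      rewrite /g /fv; lra.
    + by rewrite leey.
    + by have := fnoinf y; rewrite E.
exists (lA / r), lB, lC; split; first exact: divr_ge0 lA0 (ltW hr).
move=> x; rewrite Efin; congr (_%:E); rewrite divfK; last by apply/lt0r_neq0.
rewrite /Gl; ring.
Unshelve. all: end_near.
Qed.
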